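(* Let $g\ge1$, $A=\begin{pmatrix}0&0\\1&0\end{pmatrix}$, and let $\mathcal M_A=\{X(\lambda)=\lambda^{g+1}A+\sum_{i=0}^g\lambda^iX_i\mid X_i\in\mathfrak{sl}(2)\}$ with the Poisson tensor $P_0$ described in the context. The symplectic leaves of $P_0$ have dimension $2(g+1)$. Moreover, define $H(\lambda):\mathcal M_A\to\mathbb C$ by $H(X(\lambda))=\tfrac12\mathrm{Tr}\,X(\lambda)^2$ and let $H_i$ be the coefficient of $\lambda^i$ in $H(\lambda)$. Then $H_{2g+1},\dots,H_{g+1}$ are functionally independent Casimir functions of $P_0$, and consequently the symplectic leaves of $P_0$ are the level surfaces of these Casimirs.
   Context: Tangent and cotangent spaces of $\mathcal M_A\cong\mathfrak{sl}(2)^{g+1}$ are identified with $\mathfrak{sl}(2)^{g+1}$ via the pairing $\langle(V_i),(W_i)\rangle=\sum_{i=0}^g\mathrm{Tr}(V_iW_i)$. Put $X_{g+1}:=A$ and $X_m:=0$ for $m>g+1$. The Poisson tensor $P_0$ maps a covector $(W_0,\dots,W_g)$ to the vector $(\dot X_0,\dots,\dot X_g)$ with $\dot X_i=\sum_{j=0}^{g-i}[X_{i+j+1},W_j]$. *)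

(* Defs.v *)
From HB Require Import structures.
From mathcomp Require Import all_boot all_order all_algebra.
Set Implicit Arguments. Unset Strict Implicit. Unset Printing Implicit Defensive.
Import GRing.Theory Num.Theory.
Local Open Scope ring_scope.

Definition Amx (R : nzRingType) : 'M[R]_2 :=
  \matrix_(i < 2, j < 2) (((i : nat) == 1%N) && ((j : nat) == 0%N))%:R.

(* Points (and tangent / cotangent vectors) of M_A ~ sl(2)^{g+1}:
   families (X_0, ..., X_g) of 2x2 matrices; sl(2)-membership is [slpt]. *)
Notation pt R g := {ffun 'I_g.+1 -> 'M[R]_2}.

Definition slpt (R : nzRingType) g (X : pt R g) : Prop :=
  forall i, \tr (X i) = 0.

Definition Xext (R : nzRingType) g (X : pt R g) (m : nat) : 'M[R]_2 :=
  if (m < g.+1)%N then X (inord m)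
  else if m == g.+1 then Amx R else 0.

Definition Xlam (R : nzRingType) g (X : pt R g) : 'M[{poly R}]_2 :=
  \matrix_(r < 2, s < 2) \sum_(i < g.+2) (Xext X i r s)%:P * 'X^i.

Definition Hcoef (R : comUnitRingType) g (X : pt R g) (k : nat) : R :=
  (\tr (Xlam X *m Xlam X))`_k / 2.

(* Differential of H_k at X applied to the tangent vector V:
   d/dt H_k(X + t V) at t = 0, computed as the coefficient of t^1 of the
   polynomial t |-> H_k(X + t V). *)
Definition dH (C : fieldType) g (X : pt C g) (k : nat) (V : pt C g) : C :=
  (Hcoef [ffun i => map_mx polyC (X i) + 'X *: map_mx polyC (V i)] k)`_1.

Definition pairing (R : nzRingType) g (V W : pt R g) : R :=
  \sum_(i < g.+1) \tr (V i *m W i).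

Definition lie (R : nzRingType) (a b : 'M[R]_2) : 'M[R]_2 := a *m b - b *m a.

Definition P0 (R : nzRingType) g (X W : pt R g) : pt R g :=
  [ffun i : 'I_g.+1 => \sum_(j < g.+1 | (i + j <= g)%N)
       lie (Xext X (i + j + 1)) (W j)].

Definition slspace (C : fieldType) g : {vspace pt C g} :=
  lker (linfun (fun W : pt C g => \row_(i < g.+1) \tr (W i))).

(* Main.v *)
Require Import Defs.
From HB Require Import structures.
From mathcomp Require Import all_boot all_order all_algebra.
From mathcomp Require Import zify ring.
Set Implicit Arguments. Unset Strict Implicit. Unset Printing Implicit Defensive.
Import GRing.Theory Num.Theory.
Local Open Scope ring_scope.

Lemma sum_trunc (V : nmodType) (F : nat -> V) m n :
  (m <= n)%N -> (forall j, (m <= j)%N -> F j = 0) ->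
  \sum_(j < n) F j = \sum_(j < m) F j.
Proof.
move=> le FZ; rewrite (big_ord_widen _ _ le) [RHS]big_mkcond /=.
rewrite [LHS]big_mkcond /=; apply: eq_bigr => i _.
by case: ifP => // /negbT; rewrite -leqNgt => /FZ.
Qed.

Lemma Xext_big (R : nzRingType) g (X : pt R g) m : (g.+1 < m)%N -> Xext X m = 0.
Proof. by move=> h; rewrite /Xext ltnNge (ltnW h) /= gtn_eqF. Qed.

Lemma coef_Xlam (R : nzRingType) g (Y : pt R g) r s a :
  (Xlam Y r s)`_a = Xext Y a r s.
Proof.
rewrite mxE coef_sum.
under eq_bigr do rewrite coefCM coefXn.
case: (ltnP a g.+2) => ha.
  rewrite (bigD1 (Ordinal ha)) //= eqxx mulr1 big1 ?addr0 // => i.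
  by rewrite -val_eqE /= eq_sym => /negbTE ->; rewrite mulr0.
rewrite big1 ?Xext_big ?mxE // => i _.
by rewrite (gtn_eqF (leq_trans (ltn_ord i) ha)) mulr0.
Qed.

Lemma coef_trsq (R : comNzRingType) g (Y : pt R g) k :
  (\tr (Xlam Y *m Xlam Y))`_k = \sum_(a < k.+1) \tr (Xext Y a *m Xext Y (k - a)).
Proof.
rewrite /mxtrace coef_sum.
under eq_bigr do rewrite mxE coef_sum.
under [RHS]eq_bigr do rewrite /mxtrace.
rewrite [RHS]exchange_big /=; apply: eq_bigr => r _.
under [RHS]eq_bigr do rewrite mxE.
rewrite [RHS]exchange_big /=; apply: eq_bigr => s _.
rewrite coefM; apply: eq_bigr => a _.
by rewrite !coef_Xlam.
Qed.

Definition Vext (R : nzRingType) g (V : pt R g) (a : nat) : 'M[R]_2 :=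
  if (a < g.+1)%N then V (inord a) else 0.

Lemma Amx_map (C : nzRingType) : map_mx polyC (Amx C) = Amx {poly C}.
Proof. by apply/matrixP => i j; rewrite !mxE rmorph_nat. Qed.

Lemma Xext_pert (C : nzRingType) g (X V : pt C g) a :
  Xext [ffun i => map_mx polyC (X i) + 'X *: map_mx polyC (V i)] a
  = map_mx polyC (Xext X a) + 'X *: map_mx polyC (Vext V a).
Proof.
rewrite /Xext /Vext; case: ifP => ha; first by rewrite ffunE.
case: ifP => _; first by rewrite Amx_map map_mx0 scaler0 addr0.
by rewrite !map_mx0 scaler0 addr0.
Qed.

Lemma coef1_tr (C : comNzRingType) n (x y x' y' : 'M[C]_n) :
  (\tr ((map_mx polyC x + 'X *: map_mx polyC y) *m
        (map_mx polyC x' + 'X *: map_mx polyC y')))`_1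
  = \tr (x *m y') + \tr (y *m x').
Proof.
rewrite mulmxDl !mulmxDr -!scalemxAl -!scalemxAr scalerA -!map_mxM.
rewrite !mxtraceD !mxtraceZ !trace_map_mx !coefD coefC /=.
by rewrite -mulrA !coefXM /= !coefC /= add0r addr0.
Qed.

Lemma dH_full (C : fieldType) g (X V : pt C g) k : (2 : C) != 0 ->
  dH X k V = \sum_(a < k.+1) \tr (Vext V a *m Xext X (k - a)).
Proof.
move=> h2; rewrite /dH /Hcoef.
have -> : (2 : {poly C})^-1 = (2^-1)%:P by rewrite -polyCV rmorph_nat.
rewrite coefMC coef_trsq coef_sum.
under eq_bigr do rewrite !Xext_pert coef1_tr.
rewrite big_split /=.
have -> : \sum_(a < k.+1) \tr (Xext X a *m Vext V (k - a))
        = \sum_(a < k.+1) \tr (Vext V a *m Xext X (k - a)).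
  rewrite (reindex_inj rev_ord_inj) /=; apply: eq_bigr => a _.
  by rewrite mxtrace_mulC subSS subKn // -ltnS.
by rewrite -mulr2n; field.
Qed.

Lemma dHE (C : fieldType) g (X V : pt C g) k : (2 : C) != 0 -> (g <= k)%N ->
  dH X k V = \sum_(j < g.+1) \tr (V j *m Xext X (k - j)).
Proof.
move=> h2 hk; rewrite dH_full // (@sum_trunc _ (fun a => \tr (Vext V a *m Xext X (k - a))) g.+1) //.
  by apply: eq_bigr => j _; rewrite /Vext ltn_ord inord_val.
by move=> j hj; rewrite /Vext ltnNge hj /= mul0mx mxtrace0.
Qed.
Definition i0 : 'I_2 := @Ordinal 2 0 isT.
Definition i1 : 'I_2 := @Ordinal 2 1 isT.
Lemma ord2 (i : 'I_2) : i = i0 \/ i = i1.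
Proof. by case: i => [[|[|//]] ?]; [left|right]; apply: val_inj. Qed.

Lemma o0E : (ord0 : 'I_2) = i0. Proof. exact: val_inj. Qed.
Lemma o1E : (lift ord0 (ord0 : 'I_1) : 'I_2) = i1. Proof. exact: val_inj. Qed.

Lemma tr2 (R : nzRingType) (M : 'M[R]_2) : \tr M = M i0 i0 + M i1 i1.
Proof. by rewrite /mxtrace !big_ord_recl big_ord0 addr0 o1E o0E. Qed.

Lemma mul2E (R : nzRingType) (M N : 'M[R]_2) i j :
  (M *m N) i j = M i i0 * N i0 j + M i i1 * N i1 j.
Proof. by rewrite mxE !big_ord_recl big_ord0 addr0 o1E o0E. Qed.

Lemma mx2P (R : nzRingType) (M N : 'M[R]_2) :
  M i0 i0 = N i0 i0 -> M i0 i1 = N i0 i1 -> M i1 i0 = N i1 i0 -> M i1 i1 = N i1 i1 -> M = N.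
Proof.
move=> h1 h2 h3 h4; apply/matrixP => i j.
by case: (ord2 i) => ->; case: (ord2 j) => ->.
Qed.

Lemma AmxE (R : nzRingType) i j : Amx R i j = ((i == i1) && (j == i0))%:R.
Proof. by rewrite mxE. Qed.

Definition Bmx (R : nzRingType) : 'M[R]_2 :=
  \matrix_(i < 2, j < 2) (((i : nat) == 0%N) && ((j : nat) == 1%N))%:R.

Lemma trA (R : nzRingType) : \tr (Amx R) = 0.
Proof. by rewrite tr2 !mxE /= addr0. Qed.
Lemma trB (R : nzRingType) : \tr (Bmx R) = 0.
Proof. by rewrite tr2 !mxE /= addr0. Qed.
Lemma trBA (R : nzRingType) : \tr (Bmx R *m Amx R) = 1.
Proof. by rewrite tr2 !mul2E !mxE /=; rewrite !(mulr0, mul0r, mulr1, addr0, add0r). Qed.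

Lemma nondeg2 (C : fieldType) (Y : 'M[C]_2) : (2 : C) != 0 -> \tr Y = 0 ->
  (forall Z : 'M[C]_2, \tr Z = 0 -> \tr (Y *m Z) = 0) -> Y = 0.
Proof.
move=> h2 tY hZ.
have e1 := hZ (Bmx C) (trB _).
have e2 := hZ (Amx C) (trA _).
have e3 := hZ (\matrix_(i < 2, j < 2) (((i : nat) == 0%N) && ((j : nat) == 0%N))%:R
               - \matrix_(i < 2, j < 2) (((i : nat) == 1%N) && ((j : nat) == 1%N))%:R).
move: tY e1 e2 e3; rewrite !tr2 !mul2E !mxE /=.
rewrite !(mulr0, mul0r, mulr1, addr0, add0r, subr0, sub0r, oppr0) => tY e1 e2 e3.
have {e3} e3 := e3 (subrr 1); rewrite mulrN1 in e3.
have y11 : Y i0 i0 = 0.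
  have : Y i0 i0 *+ 2 = 0.
    have -> : Y i0 i0 *+ 2 = (Y i0 i0 + Y i1 i1) + (Y i0 i0 - Y i1 i1) by ring.
    by rewrite tY e3 addr0.
  by rewrite -mulr_natr => /eqP; rewrite mulf_eq0 (negbTE h2) orbF => /eqP.
apply: mx2P; rewrite !mxE ?e1 ?e2 ?y11 //.
by move: tY; rewrite y11 add0r.
Qed.

Lemma comm2 (C : fieldType) (W : 'M[C]_2) : (2 : C) != 0 -> \tr W = 0 ->
  lie (Amx C) W = 0 -> W = W i1 i0 *: Amx C.
Proof.
move=> h2 tW hl.
have h k l : (lie (Amx C) W) k l = 0 by rewrite hl mxE.
have a := h i0 i0; have b := h i1 i1; have c := h i1 i0.
move: a b c tW; rewrite /lie !mxE !big_ord_recl !big_ord0 !addr0 o1E o0E !mxE /= tr2.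
rewrite !(mulr0, mul0r, mulr1, mul1r, addr0, add0r, subr0, sub0r, oppr0) => a b c tW.
have w01 : W i0 i1 = 0 by move/eqP: a; rewrite oppr_eq0 => /eqP.
have w00 : W i0 i0 = 0.
  have : W i0 i0 *+ 2 = 0.
    have -> : W i0 i0 *+ 2 = (W i0 i0 + W i1 i1) + (W i0 i0 - W i1 i1) by ring.
    by rewrite tW c addr0.
  by rewrite -mulr_natr => /eqP; rewrite mulf_eq0 (negbTE h2) orbF => /eqP.
apply: mx2P; rewrite !mxE /= ?mulr0 ?mulr1 //.
by move: tW; rewrite w00 add0r.
Qed.

Definition lf (R : pzRingType) (U V : lmodType R) (f : U -> V) (fL : linear f) := f.
HB.instance Definition _ (R : pzRingType) (U V : lmodType R) (f : U -> V) (fL : linear f) :=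
  GRing.isLinear.Build R U V *:%R (lf fL) fL.

Lemma lfunE' (K : fieldType) (aT rT : vectType K) (f : aT -> rT) (fL : linear f) v :
  linfun f v = f v.
Proof. exact: (lfunE (lf fL) v). Qed.

Lemma dim_pt (C : fieldType) g : \dim {:pt C g} = (g.+1 * 4)%N.
Proof. by rewrite dimvf /dim /= card_ord dim_matrix. Qed.

Lemma dim_row (C : fieldType) n : \dim {:'rV[C]_n} = n.
Proof. by rewrite dimvf dim_matrix mul1r. Qed.

Lemma lie_lin (R : comNzRingType) (Y U V : 'M[R]_2) a :
  lie Y (a *: U + V) = a *: lie Y U + lie Y V.
Proof.
rewrite /lie mulmxDr mulmxDl -scalemxAr -scalemxAl scalerBr opprD addrACA //.
Qed.

Lemma lie0 (R : nzRingType) (Y : 'M[R]_2) : lie Y 0 = 0.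
Proof. by rewrite /lie mulmx0 mul0mx subrr. Qed.

Lemma P0_lin (R : comNzRingType) g (X : pt R g) : linear (P0 X).
Proof.
move=> a u v; apply/ffunP => i; rewrite !ffunE scaler_sumr -big_split /=.
by apply: eq_bigr => j _; rewrite !ffunE lie_lin.
Qed.

Definition trrow (R : nzRingType) g (W : pt R g) : 'rV[R]_g.+1 := \row_i \tr (W i).

Lemma trrow_lin (R : comNzRingType) g : linear (@trrow R g).
Proof.
by move=> a u v; apply/rowP => i; rewrite !mxE !ffunE mxtraceD mxtraceZ.
Qed.

Lemma mem_slP (C : fieldType) g (W : pt C g) : reflect (slpt W) (W \in slspace C g).
Proof.
rewrite memv_ker.
have -> : linfun (fun W0 : pt C g => \row_(i < g.+1) \tr (W0 i)) W = trrow W.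
  exact: (lfunE' (@trrow_lin C g)).
apply: (iffP eqP) => [h i|h].
  by have := congr1 (fun r : 'rV[C]_g.+1 => r 0 i) h; rewrite !mxE.
by apply/rowP => i; rewrite !mxE h.
Qed.

Definition Dmx (R : nzRingType) : 'M[R]_2 :=
  \matrix_(i < 2, j < 2) (((i : nat) == 0%N) && ((j : nat) == 0%N))%:R.
Lemma trD (R : nzRingType) : \tr (Dmx R) = 1.
Proof. by rewrite tr2 !mxE /= addr0. Qed.

Lemma dim_sl (C : fieldType) g : \dim (slspace C g) = (3 * g.+1)%N.
Proof.
have := limg_ker_dim (linfun (@trrow C g)) fullv.
rewrite capfv dim_pt.
have -> : limg (linfun (@trrow C g)) = fullv.
  apply/eqP; rewrite eqEsubv subvf /=; apply/subvP => r _.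
  have -> : r = linfun (@trrow C g) [ffun i => r 0 i *: Dmx C].
    rewrite (lfunE' (@trrow_lin C g)); apply/rowP => i.
    by rewrite !mxE ffunE mxtraceZ trD mulr1; congr (r _ _); apply: val_inj.
  exact: memv_img (memvf _).
rewrite dim_row /slspace.
have -> : linfun (fun W0 : pt C g => \row_(i < g.+1) \tr (W0 i)) = linfun (@trrow C g) by [].
move=> h; rewrite -[LHS](addnK g.+1) h; lia.
Qed.

Lemma tr_lie (R : comNzRingType) (Y W : 'M[R]_2) : \tr (lie Y W) = 0.
Proof. by rewrite /lie raddfB /= mxtrace_mulC subrr. Qed.

Lemma P0_sl (R : comNzRingType) g (X W : pt R g) : slpt (P0 X W).
Proof. by move=> i; rewrite ffunE raddf_sum big1 // => j _; exact: tr_lie. Qed.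

Lemma tr_lie_mul (R : comNzRingType) (Y W U : 'M[R]_2) :
  \tr (lie Y W *m U) = - \tr (W *m lie Y U).
Proof.
rewrite /lie mulmxBl mulmxBr !raddfB /= -!mulmxA.
have -> : \tr (Y *m (W *m U)) = \tr (W *m (U *m Y)) by rewrite mxtrace_mulC -mulmxA.
by rewrite opprK addrC.
Qed.

Lemma skew (R : comNzRingType) g (X W U : pt R g) :
  pairing (P0 X W) U = - pairing W (P0 X U).
Proof.
rewrite /pairing -sumrN.
have eL i : \tr (P0 X W i *m U i) = \sum_(j < g.+1)
    (if (i + j <= g)%N then \tr (lie (Xext X (i + j + 1)) (W j) *m U i) else 0).
  by rewrite ffunE mulmx_suml (raddf_sum (@mxtrace R 2)) big_mkcond.
have eR j : - \tr (W j *m P0 X U j) = \sum_(i < g.+1)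
    (if (j + i <= g)%N then - \tr (W j *m lie (Xext X (j + i + 1)) (U i)) else 0).
  rewrite ffunE mulmx_sumr (raddf_sum (@mxtrace R 2)) -sumrN big_mkcond.
  by apply: eq_bigr => i _; case: ifP; rewrite ?oppr0.
under eq_bigr do rewrite eL.
under [RHS]eq_bigr do rewrite eR.
rewrite exchange_big /=; apply: eq_bigr => j _; apply: eq_bigr => i _.
rewrite addnC; case: ifP => _ //.
by rewrite tr_lie_mul.
Qed.

Lemma lieN (R : nzRingType) (a b : 'M[R]_2) : lie a b = - lie b a.
Proof. by rewrite /lie opprB. Qed.

Lemma half0 (C : fieldType) (S : 'M[C]_2) : (2 : C) != 0 -> S = - S -> S = 0.
Proof.
move=> h2 hS.
have : (2 : C) *: S = 0 by rewrite scaler_nat mulr2n {1}hS addNr.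
by move/eqP; rewrite scaler_eq0 (negbTE h2) /= => /eqP.
Qed.

Lemma grad_ker (C : fieldType) g (X : pt C g) k : (2 : C) != 0 -> (g.+1 <= k)%N ->
  P0 X [ffun j : 'I_g.+1 => Xext X (k - j)] = 0.
Proof.
move=> h2 hk; apply/ffunP => i; rewrite !ffunE.
under eq_bigr do rewrite ffunE.
pose f j := lie (Xext X (i + j + 1)) (Xext X (k - j)).
have fz j : (g - i + 1 <= j)%N -> f j = 0.
  move=> hj; rewrite /f Xext_big; last by have := ltn_ord i; lia.
  by rewrite lieN lie0 oppr0.
have -> : \sum_(j < g.+1 | (i + j <= g)%N) lie (Xext X (i + j + 1)) (Xext X (k - j))
        = \sum_(j < g.+1) f j.
  rewrite big_mkcond /=; apply: eq_bigr => j _; case: ifP => // /negbT h.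
  by move: h; rewrite -ltnNge => h; rewrite fz //; have := ltn_ord i; lia.
rewrite (@sum_trunc _ f (g - i + 1)) //; last by lia.
rewrite -(@sum_trunc _ f (g - i + 1) (k - i)) //; last by have := ltn_ord i; lia.
apply: half0 => //.
rewrite [LHS](reindex_inj rev_ord_inj) /= -sumrN; apply: eq_bigr => j _.
have hj := ltn_ord j.
rewrite /f [in RHS]lieN opprK; congr (lie (Xext X _) (Xext X _)); lia.
Qed.

Definition Gk (R : nzRingType) g (X : pt R g) k : pt R g := [ffun j : 'I_g.+1 => Xext X (k - j)].

Lemma dH_pair (C : fieldType) g (X V : pt C g) k : (2 : C) != 0 -> (g <= k)%N ->
  dH X k V = pairing (Gk X k) V.
Proof.
move=> h2 hk; rewrite dHE //; apply: eq_bigr => j _.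
by rewrite ffunE mxtrace_mulC.
Qed.

Definition Ej (R : nzRingType) g (j : 'I_g.+1) (Z : 'M[R]_2) : pt R g :=
  [ffun i => if i == j then Z else 0].

Lemma pair_Ej (R : nzRingType) g (D : pt R g) j Z : pairing D (Ej j Z) = \tr (D j *m Z).
Proof.
rewrite /pairing (bigD1 j) //= big1 ?addr0 ?ffunE ?eqxx // => i /negbTE hi.
by rewrite ffunE hi mulmx0 mxtrace0.
Qed.

Lemma Ej_sl (R : nzRingType) g (j : 'I_g.+1) (Z : 'M[R]_2) : \tr Z = 0 -> slpt (Ej j Z).
Proof. by move=> hZ i; rewrite ffunE; case: ifP => // _; rewrite mxtrace0. Qed.

Lemma Xext_sl (R : nzRingType) g (X : pt R g) m : slpt X -> \tr (Xext X m) = 0.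
Proof.
move=> hX; rewrite /Xext; case: ifP => _; first exact: hX.
by case: ifP => _; rewrite ?trA ?mxtrace0.
Qed.

Lemma Gk_sl (R : nzRingType) g (X : pt R g) k : slpt X -> slpt (Gk X k).
Proof. by move=> hX i; rewrite ffunE Xext_sl. Qed.

Lemma pairingC (R : comNzRingType) g (V W : pt R g) : pairing V W = pairing W V.
Proof. by apply: eq_bigr => i _; rewrite mxtrace_mulC. Qed.

Lemma part2 (C : fieldType) g (X : pt C g) : (2 : C) != 0 -> slpt X ->
    forall k : nat, (g.+1 <= k <= 2 * g + 1)%N ->
    forall W : pt C g, slpt W ->
      (forall V : pt C g, slpt V -> pairing W V = dH X k V) ->
      P0 X W = 0.
Proof.
move=> h2 hX k /andP[hk _] W hW hV.
suff -> : W = Gk X k by apply: grad_ker.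
apply/ffunP => j; apply/eqP; rewrite -subr_eq0; apply/eqP.
apply: nondeg2 => //; first by rewrite raddfB /= hW Gk_sl // subrr.
move=> Z hZ.
have := hV (Ej j Z) (Ej_sl j hZ).
rewrite dH_pair //; last by apply: ltnW.
by rewrite !pair_Ej mulmxBl raddfB /= => ->; rewrite subrr.
Qed.

Definition Mx (C : fieldType) g (X : pt C g) : 'M[C]_g.+1 :=
  \matrix_(m < g.+1, k < g.+1) \tr (Bmx C *m Xext X (g.+1 + k - m)).

Lemma dH_Ej (C : fieldType) g (X : pt C g) (m : 'I_g.+1) k Z : (2 : C) != 0 ->
  dH X (g.+1 + k) (Ej m Z) = \tr (Z *m Xext X (g.+1 + k - m)).
Proof.
move=> h2; rewrite dH_pair //; last by rewrite ltnW // ltn_addr.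
by rewrite pair_Ej ffunE mxtrace_mulC.
Qed.

Lemma Mx_unit (C : fieldType) g (X : pt C g) : Mx X \in unitmx.
Proof.
rewrite unitmxE det_trig.
  rewrite big1 ?unitr1 // => i _; rewrite mxE addnK /Xext ltnn eqxx.
  exact: trBA.
apply/is_trig_mxP => i j hij; rewrite mxE Xext_big ?mulmx0 ?mxtrace0 //.
have := ltn_ord i; lia.
Qed.

Lemma part3 (C : fieldType) g (X : pt C g) : (2 : C) != 0 ->
    forall c : 'I_g.+1 -> C,
      (forall V : pt C g, slpt V ->
         \sum_(k < g.+1) c k * dH X (g.+1 + k) V = 0) ->
      forall k, c k = 0.
Proof.
move=> h2 c hc k.
pose cc : 'cV[C]_g.+1 := \col_k c k.
have h0 : Mx X *m cc = 0.
  apply/colP => m; rewrite !mxE.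
  rewrite -[RHS](hc (Ej m (Bmx C)) (Ej_sl m (trB C))).
  by apply: eq_bigr => l _; rewrite !mxE dH_Ej // mulrC.
have : cc = 0 by rewrite -(mulKmx (Mx_unit X) cc) h0 mulmx0.
by move/colP/(_ k); rewrite !mxE.
Qed.

Definition chi (C : fieldType) g (X : pt C g) (V : pt C g) : 'rV[C]_g.+1 :=
  \row_(k < g.+1) \sum_(j < g.+1) \tr (V j *m Xext X (g.+1 + k - j)).

Lemma chi_lin (C : fieldType) g (X : pt C g) : linear (chi X).
Proof.
move=> a u v; apply/rowP => k; rewrite !mxE mulr_sumr -big_split /=.
by apply: eq_bigr => j _; rewrite !ffunE mulmxDl -scalemxAl mxtraceD mxtraceZ.
Qed.

Lemma chi_dH (C : fieldType) g (X V : pt C g) k : (2 : C) != 0 ->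
  chi X V 0 k = dH X (g.+1 + k) V.
Proof. by move=> h2; rewrite mxE dHE // ltnW // ltn_addr. Qed.

Lemma dim_chi_img (C : fieldType) g (X : pt C g) :
  \dim (linfun (chi X) @: slspace C g)%VS = g.+1.
Proof.
have h1 := dimvS (subvf (linfun (chi X) @: slspace C g)%VS).
rewrite dim_row in h1.
suff h3 : (fullv <= linfun (chi X) @: slspace C g)%VS.
  by have := dimvS h3; rewrite dim_row; lia.
apply/subvP => r _.
pose a := r *m invmx (Mx X).
have -> : r = linfun (chi X) [ffun i => a 0 i *: Bmx C].
  rewrite (lfunE' (chi_lin X)); apply/rowP => k.
  rewrite mxE -{1}(mulmxKV (Mx_unit X) r) -/a mxE.
  by apply: eq_bigr => j _; rewrite ffunE -scalemxAl mxtraceZ !mxE.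
apply: memv_img; apply/mem_slP => i; rewrite ffunE mxtraceZ trB mulr0 //.
Qed.

Definition psi (C : fieldType) g (W : pt C g) : 'rV[C]_g.+1 := \row_(m < g.+1) W m i1 i0.

Lemma psi_lin (C : fieldType) g : linear (@psi C g).
Proof. by move=> a u v; apply/rowP => k; rewrite !mxE !ffunE !mxE. Qed.

Lemma ker_inj (C : fieldType) g (X W : pt C g) : (2 : C) != 0 ->
  slpt W -> P0 X W = 0 -> (forall m, W m i1 i0 = 0) -> W = 0.
Proof.
move=> h2 hW hP hz.
suff H n : forall m : 'I_g.+1, (m < n)%N -> W m = 0.
  by apply/ffunP => m; rewrite ffunE (H g.+1).
elim: n => [//|n IH] m hm.
have [hmn|hmn] := ltnP m n; first exact: IH.
have em : (m : nat) = n by apply/eqP; rewrite eqn_leq hmn -ltnS hm.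
have hc := congr1 (fun F : pt C g => F (inord (g - m))) hP.
rewrite /= !ffunE inordK in hc; last by have := ltn_ord m; lia.
rewrite (bigD1 m) /= in hc; last by have := ltn_ord m; lia.
rewrite big1 ?addr0 in hc; last first.
  move=> j /andP[hj hjm]; rewrite IH ?lie0 //.
  have : (j : nat) != m by [].
  have := ltn_ord m; move: hj; lia.
have e : (g - m + m + 1 = g.+1)%N by have := ltn_ord m; lia.
rewrite e /Xext ltnn eqxx in hc.
by rewrite (comm2 h2 (hW m) hc) hz scale0r.
Qed.

Lemma pairing0 (R : nzRingType) g (W : pt R g) : pairing W 0 = 0.
Proof. by rewrite /pairing big1 // => i _; rewrite ffunE mulmx0 mxtrace0. Qed.

Lemma dim_K (C : fieldType) g (X : pt C g) : (2 : C) != 0 ->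
  (\dim (slspace C g :&: lker (linfun (P0 X))) <= g.+1)%N.
Proof.
move=> h2.
rewrite -(@limg_dim_eq _ _ _ (linfun (@psi C g))).
  by have := dimvS (subvf (linfun (@psi C g) @: (slspace C g :&: lker (linfun (P0 X))))%VS);
     rewrite dim_row.
apply/eqP; rewrite -subv0; apply/subvP => W.
rewrite !memv_cap memv0 => /andP[/andP[/mem_slP hS hP] hps].
rewrite memv_ker (lfunE' (P0_lin X)) in hP; rewrite memv_ker (lfunE' (@psi_lin C g)) in hps.
apply/eqP; apply: (ker_inj h2 hS (eqP hP)) => m.
by have := congr1 (fun r : 'rV[C]_g.+1 => r 0 m) (eqP hps); rewrite !mxE.
Qed.

Lemma img_L (C : fieldType) g (X : pt C g) : (2 : C) != 0 ->
  (linfun (P0 X) @: slspace C g <= slspace C g :&: lker (linfun (chi X)))%VS.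
Proof.
move=> h2; apply/subvP => v /memv_imgP [w hw ->].
rewrite memv_cap (lfunE' (P0_lin X)).
apply/andP; split; first by apply/mem_slP; apply: P0_sl.
rewrite memv_ker (lfunE' (chi_lin X)).
apply/eqP/rowP => k; rewrite !mxE.
have -> : \sum_(j < g.+1) \tr (P0 X w j *m Xext X (g.+1 + k - j))
          = pairing (P0 X w) (Gk X (g.+1 + k)).
  by apply: eq_bigr => j _; congr (\tr (_ *m _)); rewrite ffunE.
by rewrite skew grad_ker ?pairing0 ?oppr0 // leq_addr.
Qed.

Lemma img_eq (C : fieldType) g (X : pt C g) : (2 : C) != 0 ->
  (\dim (linfun (P0 X) @: slspace C g) = 2 * g.+1)%N /\
  (linfun (P0 X) @: slspace C g = slspace C g :&: lker (linfun (chi X)))%VS.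
Proof.
move=> h2.
have e1 := limg_ker_dim (linfun (P0 X)) (slspace C g).
have e2 := limg_ker_dim (linfun (chi X)) (slspace C g).
have e3 := dimvS (img_L X h2).
have e4 := dim_K X h2.
rewrite dim_chi_img dim_sl in e2; rewrite dim_sl in e1.
set a := \dim (linfun (P0 X) @: slspace C g)%VS in e1 e3 *.
set b := \dim (slspace C g :&: lker (linfun (chi X)))%VS in e2 e3 *.
set c := \dim (slspace C g :&: lker (linfun (P0 X)))%VS in e1 e4 *.
have ha : a = (2 * g.+1)%N by lia.
have hb : (b <= a)%N by lia.
split; first exact: ha.
by apply/eqP; rewrite eqEdim img_L //=.
Qed.

Theorem mainTheorem3 (C : numClosedFieldType) (g : nat) (hg : (1 <= g)%N) :
  [/\
   (* symplectic leaves have dimension 2(g+1): rank of P_0 at every point *)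
   (forall X : pt C g, slpt X ->
      \dim (linfun (P0 X) @: slspace C g)%VS = (2 * g.+1)%N),
   (* H_{g+1}, ..., H_{2g+1} are Casimirs: their differentials lie in ker P_0 *)
   (forall X : pt C g, slpt X ->
    forall k : nat, (g.+1 <= k <= 2 * g + 1)%N ->
    forall W : pt C g, slpt W ->
      (forall V : pt C g, slpt V -> pairing W V = dH X k V) ->
      P0 X W = 0),
   (* they are functionally independent: differentials linearly independent *)
   (forall X : pt C g, slpt X ->
    forall c : 'I_g.+1 -> C,
      (forall V : pt C g, slpt V ->
         \sum_(k < g.+1) c k * dH X (g.+1 + k) V = 0) ->
      forall k, c k = 0)
 &  (* tangent spaces of the leaves = tangent spaces of the level sets *)
   (forall X : pt C g, slpt X ->
    forall V : pt C g,
      (slpt V /\ forall k : nat, (g.+1 <= k <= 2 * g + 1)%N -> dH X k V = 0)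
      <-> exists2 W : pt C g, slpt W & V = P0 X W)].
Proof.
have h2 : (2 : C) != 0 by rewrite pnatr_eq0.
split.
- move=> X _; exact: (proj1 (img_eq X h2)).
- move=> X hX; exact: part2.
- move=> X _; exact: part3.
move=> X hX V; split.
  move=> [hV hk].
  have hm : V \in (linfun (P0 X) @: slspace C g)%VS.
    rewrite (proj2 (img_eq X h2)) memv_cap; apply/andP; split.
      exact/mem_slP.
    rewrite memv_ker (lfunE' (chi_lin X)).
    apply/eqP/rowP => k; rewrite chi_dH // mxE; apply: hk.
    have := ltn_ord k; lia.
  case/memv_imgP: hm => w /mem_slP hw ->; exists w => //.
  exact: (lfunE' (P0_lin X)).
move=> [W hW ->]; split; first exact: P0_sl.
move=> k /andP[hk _].
rewrite (dH_pair X (P0 X W) h2 (ltnW hk)) pairingC skew (grad_ker X h2 hk) pairing0.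
exact: oppr0.
Qed.
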